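(* Let $X$ be a Banach space over $\mathbb R$ and let $\sum_n x_n$ be a series in $X$ which is not unconditionally convergent. Let $\mathcal I$ be an ideal on $\mathbb N$ with the Baire property. Then the set $$A(\mathcal I):=\left\{t \in \{0,1\}^{\mathbb N} \colon \sum_n t(n)x_n \text{ is } \mathcal I\text{-convergent}\right\}$$ is meager in $\{0,1\}^{\mathbb N}$.
   Context: $\mathbb N=\{1,2,\dots\}$. An ideal on $\mathbb N$ is a family $\mathcal I\subset\mathcal P(\mathbb N)$ closed under finite unions and subsets, with $\mathbb N\notin\mathcal I$ and containing all finite subsets of $\mathbb N$. Identifying subsets of $\mathbb N$ with their characteristic functions, $\mathcal I$ is regarded as a subset of the Cantor space $\{0,1\}^{\mathbb N}$ (product topology), and ''$\mathcal I$ has the Baire property'' refers to this subset. A sequence $(y_n)$ in a normed space is $\mathcal I$-convergent to $y$ if $\{n:\|y_n-y\|>\varepsilon\}\in\mathcal I$ for every $\varepsilon>0$; a series $\sum_n y_n$ is $\mathcal I$-convergent if the sequence of its partial sums $(\sum_{i=1}^n y_i)_n$ is $\mathcal I$-convergent to some element. A series $\sum_n x_n$ is unconditionally convergent if $\sum_n x_{p(n)}$ converges for every permutation $p$ of $\mathbb N$. *)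

(* Defs.v *)
From HB Require Import structures.
From mathcomp Require Import all_boot all_order all_algebra.
From mathcomp Require Import all_classical all_reals all_analysis.
From mathcomp Require Import Rstruct Rstruct_topology.
Set Implicit Arguments. Unset Strict Implicit. Unset Printing Implicit Defensive.
Import Order.TTheory GRing.Theory Num.Theory.
Import numFieldNormedType.Exports.
Local Open Scope classical_set_scope.
Local Open Scope ring_scope.

(* Indexing convention: the paper's N = {1,2,...} is represented by nat = {0,1,...}
   via n |-> n.-1 (index n of the paper is index n-1 here). *)

Definition nowhere_dense (T : topologicalType) (A : set T) : Prop :=
  (closure A)^° = set0.

Definition meager (T : topologicalType) (A : set T) : Prop :=
  exists F : nat -> set T, (forall n, nowhere_dense (F n)) /\ A `<=` \bigcup_n F n.

Definition has_Baire_property (T : topologicalType) (A : set T) : Prop :=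
  exists U : set T, open U /\ meager ((A `\` U) `|` (U `\` A)).

Definition is_ideal (I : set (set nat)) : Prop :=
  [/\ (forall A B, I A -> I B -> I (A `|` B)),
      (forall A B, B `<=` A -> I A -> I B),
      ~ I setT &
      (forall A, finite_set A -> I A)].

(* the ideal viewed as a subset of the Cantor space (characteristic functions) *)
Definition ideal_in_cantor (I : set (set nat)) : set cantor_space :=
  [set t : cantor_space | I [set n | t n]].

Definition I_cvg_to (I : set (set nat)) (V : normedModType Rdefinitions.R)
  (y : nat -> V) (l : V) : Prop :=
  forall eps : Rdefinitions.R, 0 < eps -> I [set n | eps < `|y n - l|].

(* I-convergence of a series: the partial sums (sum of the first n+1 terms at
   index n, matching the 1-based convention) I-converge to some element *)
Definition I_cvg_series (I : set (set nat)) (V : normedModType Rdefinitions.R)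
  (y : nat -> V) : Prop :=
  exists l : V, I_cvg_to I (fun n => \sum_(0 <= i < n.+1) y i) l.

Definition unconditionally_convergent (V : normedModType Rdefinitions.R)
  (x : nat -> V) : Prop :=
  forall p : nat -> nat, bijective p -> cvgn (series (fun n => x (p n))).

Definition A_set (I : set (set nat)) (V : normedModType Rdefinitions.R)
  (x : nat -> V) : set cantor_space :=
  [set t : cantor_space | I_cvg_series I (fun n => (t n)%:R *: x n)].

(* Main.v *)
Require Import Defs.
From HB Require Import structures.
From mathcomp Require Import all_boot all_order all_algebra.
From mathcomp Require Import all_classical all_reals all_analysis.
From mathcomp Require Import Rstruct Rstruct_topology.
From mathcomp Require Import zify ring lra.
Set Implicit Arguments. Unset Strict Implicit. Unset Printing Implicit Defensive.
Import Order.TTheory GRing.Theory Num.Theory.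
Import numFieldNormedType.Exports.
Local Open Scope classical_set_scope.
Definition cyl (z : cantor_space) (L : nat) : set cantor_space :=
  [set t | forall i, (i < L)%N -> t i = z i].

Lemma cyl_nbhs (z : cantor_space) L : nbhs z (cyl z L).
Proof.
elim: L => [|L IH].
  by apply: filterS (filterT) => t _ i.
have H : nbhs z [set t : cantor_space | t L = z L].
  have := @proj_continuous nat (fun _ => bool) L z.
  move=> /(_ [set z L]); apply.
  by rewrite nbhs_principalE; apply/principal_filterP.
apply: filterS (filterI IH H) => t [H1 H2] i; rewrite ltnS leq_eqVlt.
by case/orP => [/eqP -> //|/H1].
Qed.

Lemma nbhs_cyl (z : cantor_space) W : nbhs z W -> exists L, cyl z L `<=` W.
Proof.
pose F := filter_from [set: nat] (cyl z).
have FF : Filter F.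
  apply: filter_from_filter; first by exists 0%N.
  move=> i j _ _; exists (maxn i j) => // t Ht; split => k Hk; apply: Ht.
    exact: (leq_trans Hk (leq_maxl _ _)).
  exact: (leq_trans Hk (leq_maxr _ _)).
have : F --> z.
  apply/cvg_sup => i U [V] [[W'] oW <-] WfN WU.
  exists i.+1 => // t Ht; apply: WU => /=; rewrite Ht //.
move=> /(_ W) H /H [L _ HL]; by exists L.
Qed.

Lemma cyl_le z L L' : (L <= L')%N -> cyl z L' `<=` cyl z L.
Proof. by move=> LL' t H i iL; apply: H; exact: leq_trans iL LL'. Qed.

Lemma nd_ext (G : set cantor_space) : nowhere_dense G ->
  forall z L, exists y L', [/\ (L <= L')%N, cyl z L y & cyl y L' `<=` ~` closure G].
Proof.
move=> nd z L.
have [y [Hy nGy]] : exists y, cyl z L y /\ ~ closure G y.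
  apply: contrapT => H.
  have : (closure G)^° z.
    apply: filterS (cyl_nbhs z L) => y Hy.
    by apply: contrapT => nG; apply: H; exists y.
  by rewrite nd.
have : nbhs y (~` closure G).
  apply: open_nbhs_nbhs; split => //; exact/closed_openC/closed_closure.
move=> /nbhs_cyl [L0 HL0].
exists y, (maxn L L0); split => //; first exact: leq_maxl.
by apply: subset_trans HL0; apply: cyl_le; exact: leq_maxr.
Qed.

Lemma step_list (G : nat -> set cantor_space) :
  (forall n, nowhere_dense (G n)) ->
  forall (l : list (cantor_space * nat)) (A : nat),
  exists B (u : cantor_space), (A <= B)%N /\
   forall p, List.In p l -> forall w, cyl p.1 A w ->
     (forall i, (A <= i < B)%N -> w i = u i) -> ~ closure (G p.2) w.
Proof.
move=> HG; elim => [|[s j] l IH] A.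
  by exists A, (fun _ => false); split.
have [B1 [u1 [AB1 H1]]] := IH A.
pose z : cantor_space := fun i => if (i < A)%N then s i else u1 i.
have [y [L' [B1L' zy Hy]]] := nd_ext (HG j) z B1.
exists L', y; split; first exact: leq_trans AB1 B1L'.
move=> p [<-|inp] w Hw Hwu /=.
  apply: Hy => i iL'; case: (ltnP i A) => iA.
    by rewrite Hw // zy ?(leq_trans iA AB1) // /z iA.
  by apply: Hwu; rewrite iA.
apply: (H1 p inp w Hw) => i /andP[Ai iB1].
rewrite Hwu ?Ai ?(leq_trans iB1 B1L') // zy // /z ltnNge Ai //.
Qed.

Fixpoint allp (n : nat) : list cantor_space :=
  match n with
  | 0 => (fun _ => false) :: nil
  | n'.+1 => List.flat_map (fun f : cantor_space =>
       (fun i => if i == n' then true else f i) ::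
       (fun i => if i == n' then false else f i) :: nil) (allp n')
  end.

Lemma allp_spec n (w : cantor_space) : exists s, List.In s (allp n) /\ cyl s n w.
Proof.
elim: n => [|n [s [ins Hs]]]; first by exists (fun _ => false); split => //; left.
exists (fun i => if i == n then w n else s i); split.
  apply/List.in_flat_map; exists s; split => //.
  by case: (w n); [left|right; left].
move=> i; rewrite ltnS leq_eqVlt => /orP[/eqP->|lt]; first by rewrite eqxx.
by rewrite (ltn_eqF lt) Hs.
Qed.

Fixpoint upto (k : nat) : list nat :=
  match k with 0 => 0%N :: nil | k'.+1 => k :: upto k' end.

Lemma upto_spec k j : (j <= k)%N -> List.In j (upto k).
Proof.
elim: k => [|k IH]; first by rewrite leqn0 => /eqP->; left.
by rewrite leq_eqVlt => /orP[/eqP->|/IH]; [left|right].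
Qed.

Lemma stage (G : nat -> set cantor_space) :
  (forall n, nowhere_dense (G n)) ->
  forall A k, exists Bu : nat * cantor_space, (A < Bu.1)%N /\
   forall w j, (j <= k)%N -> (forall i, (A <= i < Bu.1)%N -> w i = Bu.2 i) ->
     ~ closure (G j) w.
Proof.
move=> HG A k.
have [B [u [AB H]]] := step_list HG (List.list_prod (allp A) (upto k)) A.
exists (B.+1, u); split; first exact: AB.
move=> w j jk Hw.
have [s [ins Hs]] := allp_spec A w.
apply: (H (s, j)); first exact: List.in_prod ins (upto_spec jk).
  by [].
move=> i /andP[Ai iB]; apply: Hw; rewrite Ai; exact: ltnW.
Qed.
Lemma blocks (A : nat -> nat) : A 0 = 0%N -> (forall k, A k < A k.+1)%N ->
  [/\ (forall m n, m <= n -> A m <= A n)%N, (forall k, k <= A k)%N &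
   exists blk : nat -> nat, (forall i, A (blk i) <= i < A (blk i).+1)%N /\
     (forall i k, A k <= i < A k.+1 -> blk i = k)%N].
Proof.
move=> A0 HA.
have mono : (forall m n, m <= n -> A m <= A n)%N.
  move=> m n /subnK <-; elim: (n - m)%N => // d IH.
  by rewrite addSn; exact: leq_trans IH (ltnW (HA _)).
split => //.
  by elim => // k IH; exact: leq_ltn_trans IH (HA k).
have ex : forall i, exists k, (A k <= i < A k.+1)%N.
  elim => [|i [k /andP[H1 H2]]]; first by exists 0%N; have := HA 0%N; rewrite A0.
  case: (ltnP i.+1 (A k.+1)) => H3.
    by exists k; rewrite H3 andbT; exact: leqW.
  exists k.+1; rewrite H3 /=.
  have -> : i.+1 = A k.+1 by apply/eqP; rewrite eqn_leq H2 H3.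
  exact: HA.
have [blk Hblk] := choice ex.
exists blk; split => // i k Hk.
have := Hblk i; move: Hk; move: (blk i) => k'.
move=> /andP[a1 a2] /andP[b1 b2].
case: (ltngtP k k') => // H.
  by have := leq_ltn_trans (leq_trans (mono _ _ H) b1) a2; rewrite ltnn.
by have := leq_ltn_trans (leq_trans (mono _ _ H) a1) b2; rewrite ltnn.
Qed.

Lemma core (G : nat -> set cantor_space) : (forall n, nowhere_dense (G n)) ->
  exists (A : nat -> nat) (x : cantor_space), A 0 = 0%N /\ (forall k, A k < A k.+1)%N /\
   forall n k w, (n <= k)%N -> (forall i, (A k <= i < A k.+1)%N -> w i = x i) ->
     ~ closure (G n) w.
Proof.
move=> HG.
have [f Hf] := choice (fun Ak : nat * nat => stage HG Ak.1 Ak.2).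
pose A := fix A k := if k is k'.+1 then (f (A k', k')).1 else 0%N.
pose u k := (f (A k, k)).2.
have HA : forall k, (A k < A k.+1)%N by move=> k; exact: (Hf (A k, k)).1.
have [_ _ [blk [Hb1 Hb2]]] := blocks (erefl : A 0 = 0%N) HA.
exists A, (fun i => u (blk i) i); split => //; split => // n k w nk Hw.
apply: ((Hf (A k, k)).2 w n nk) => i Hi.
by rewrite Hw // (Hb2 i k Hi).
Qed.
Lemma ideal_meager I : is_ideal I -> has_Baire_property (ideal_in_cantor I) ->
  meager (ideal_in_cantor I).
Proof.
move=> [IU IS IT IF] [U [oU [F [HF HM]]]].
exists F; split => // t It.
case: (pselect (U t)) => Ut; last by apply: HM; left.
exfalso.
have [L HL] : exists L, cyl t L `<=` U.
  by apply: nbhs_cyl; apply: open_nbhs_nbhs; split.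
have [A [x [A0 [HA Hx]]]] := core HF.
have [mono Ak [blk [Hb1 Hb2]]] := blocks A0 HA.
have key2 : forall (y : cantor_space) (b : bool), cyl t L y ->
    (forall i, (L <= i)%N -> odd (blk i) = b -> y i = x i) ->
    ideal_in_cantor I y.
  move=> y b ty Hy; apply: contrapT => nIy.
  have : (\bigcup_n F n) y by apply: HM; right; split => //; apply: HL.
  case=> n _ Fny.
  pose k := ((n + L).*2 + b)%N.
  have nk : (n <= k)%N by rewrite /k; lia.
  apply: (Hx n k y nk) _ (subset_closure Fny) => i Hi.
  have Lk : (L <= i)%N.
    have := Ak k; case/andP: Hi => Hi _ Hk; rewrite /k in Hi Hk; lia.
  by apply: Hy => //; rewrite (Hb2 _ _ Hi) /k oddD odd_double /= oddb.
pose y1 : cantor_space := fun i => if (i < L)%N then t i else if odd (blk i) then true else x i.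
pose y2 : cantor_space := fun i => if (i < L)%N then t i else if odd (blk i) then x i else true.
have I1 : ideal_in_cantor I y1.
  apply: (key2 y1 false); first by move=> i iL; rewrite /y1 iL.
  by move=> i Li Hb; rewrite /y1 ltnNge Li /= Hb.
have I2 : ideal_in_cantor I y2.
  apply: (key2 y2 true); first by move=> i iL; rewrite /y2 iL.
  by move=> i Li Hb; rewrite /y2 ltnNge Li /= Hb.
apply: IT; apply: (IS (([set n | y1 n] `|` [set n | y2 n]) `|` `I_L)).
  move=> i _; case: (ltnP i L) => iL; first by right.
  left; rewrite /y1 /y2 /= ltnNge iL /=.
  by case: (odd (blk i)); [left|right].
apply: (IU); first exact: IU.
exact: IF (finite_II L).
Qed.

Lemma ideal_blocks I : is_ideal I -> has_Baire_property (ideal_in_cantor I) ->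
  exists A : nat -> nat, A 0 = 0%N /\ (forall k, A k < A k.+1)%N /\
    forall C, I C -> exists m, forall k, (m <= k)%N ->
      exists i, (A k <= i < A k.+1)%N /\ ~ C i.
Proof.
move=> Iid BP; have [F [HF HM]] := ideal_meager Iid BP.
case: Iid => [IU IS IT IF].
have [A [x [A0 [HA Hx]]]] := core HF.
exists A; split => //; split => // C IC.
apply: contrapT => nm.
pose y : cantor_space := fun i => `[< C i >] && x i.
have Iy : ideal_in_cantor I y.
  by apply: (IS C) => // i /andP[/asboolP].
have [n _ Fny] := HM y Iy.
have [k [nk Hk]] : exists k, (n <= k)%N /\ forall i, (A k <= i < A k.+1)%N -> C i.
  apply: contrapT => H; apply: nm; exists n => k nk.
  apply: contrapT => H2; apply: H; exists k; split => // i Hi.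
  by apply: contrapT => nC; apply: H2; exists i.
apply: (Hx n k y nk) _ (subset_closure Fny) => i Hi.
by rewrite /y; have /asboolP -> := Hk i Hi.
Qed.
Local Open Scope ring_scope.

Lemma not_uc_eps (X : completeNormedModType Rdefinitions.R) (x : nat -> X) :
  ~ unconditionally_convergent x ->
  exists eps : Rdefinitions.R, 0 < eps /\ forall N, exists s : seq nat,
    [/\ uniq s, all (leq N) s & eps < `|\sum_(i <- s) x i|].
Proof.
move=> nuc; apply: contrapT => H; apply: nuc => p pb.
have H' : forall e : Rdefinitions.R, 0 < e -> exists N, forall s : seq nat,
    uniq s -> all (leq N) s -> `|\sum_(i <- s) x i| <= e.
  move=> e e0; apply: contrapT => nN; apply: H; exists e; split => // N.
  apply: contrapT => nS; apply: nN; exists N => s us aNs.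
  rewrite leNgt; apply/negP => lt; by apply: nS; exists s; split.
case: pb => g pg gp.
apply/cauchy_cvgP/cauchy_seriesP => e e0.
have [N HN] := H' (e / 2) (divr_gt0 e0 (ltr0n _ 2)).
pose M := (\max_(i < N) (g i).+1)%N.
have HM : forall j, (M <= j)%N -> (N <= p j)%N.
  move=> j Mj; rewrite leqNgt; apply/negP => pjN.
  have := @leq_bigmax _ (fun i : 'I_N => (g i).+1) (Ordinal pjN).
  rewrite /= pg -/M => H1; have := leq_trans H1 Mj; by rewrite ltnn.
exists ([set n | (M <= n)%N], [set n | (M <= n)%N]) => /=.
  by split; exists M.
case=> a b /= [Ma Mb].
rewrite -(big_map p xpredT x).
have lt2 : e / 2 < e by lra.
apply: le_lt_trans lt2; apply: HN.
  by rewrite map_inj_uniq ?iota_uniq //; exact: can_inj pg.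
apply/allP => y /mapP[j]; rewrite mem_index_iota => /andP[aj _] ->.
by apply: HM; exact: leq_trans Ma aj.
Qed.
Lemma sum_sel (R : pzRingType) (V : lmodType R) (x : nat -> V) (t : nat -> bool)
  (s : seq nat) a b : uniq s -> (forall i, (a <= i < b)%N -> t i = (i \in s)) ->
  (forall i, i \in s -> (a <= i < b)%N) ->
  \sum_(a <= i < b) (t i)%:R *: x i = \sum_(i <- s) x i.
Proof.
move=> us Ht Hs.
rewrite (eq_big_nat _ _ (F2 := fun i => if i \in s then x i else 0)); last first.
  by move=> i Hi; rewrite Ht //; case: (i \in s); rewrite ?scale1r ?scale0r.
rewrite -big_mkcond -big_filter; apply: perm_big.
apply: uniq_perm => //; first by apply: filter_uniq; exact: iota_uniq.
move=> i; rewrite mem_filter mem_index_iota; apply/andP/idP => [[] //|H].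
by split => //; exact: Hs.
Qed.

Theorem theorem3p2 (X : completeNormedModType Rdefinitions.R) (x : nat -> X)
  (I : set (set nat)) :
  ~ unconditionally_convergent x ->
  is_ideal I ->
  has_Baire_property (ideal_in_cantor I) ->
  meager (A_set I x).
Proof.
move=> nuc Iid BP.
have [eps [e0 Heps]] := not_uc_eps nuc.
have [A [A0 [HA HC]]] := ideal_blocks Iid BP.
have [mono Ak _] := blocks A0 HA.
pose S (t : cantor_space) n : X := \sum_(0 <= i < n.+1) (t i)%:R *: x i.
pose D m : set cantor_space := [set t | forall k k', (m <= k)%N -> (k < k')%N ->
  exists n n', [/\ (A k <= n < A k.+1)%N, (A k' <= n' < A k'.+1)%N &
     `|S t n' - S t n| <= eps / 2]].
exists D; split; last first.
  move=> t [l Hl].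
  have e4 : 0 < eps / 4 by lra.
  have [m Hm] := HC _ (Hl (eps / 4) e4).
  exists m => // k k' mk kk'.
  have [n [Hn nC]] := Hm k mk.
  have [n' [Hn' nC']] := Hm k' (leq_trans mk (ltnW kk')).
  exists n, n'; split => //.
  have h1 : `|S t n - l| <= eps / 4 by rewrite leNgt; apply/negP.
  have h2 : `|S t n' - l| <= eps / 4 by rewrite leNgt; apply/negP.
  have := ler_distD l (S t n') (S t n); rewrite (distrC l) => h3.
  lra.
move=> m; apply/seteqP; split => // z Hz.
have [L HL] := nbhs_cyl Hz.
pose k := maxn m L.
have [s [us As Hs]] := Heps (A k.+1).
pose M := (\max_(i <- s) i).+1%N.
have sM : forall j, j \in s -> (j < M)%N.
  by move=> j js; rewrite ltnS; exact: (@leq_bigmax_seq _ s xpredT id j js).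
pose k' := maxn k.+1 M.
pose t' : cantor_space := fun i => if (i < L)%N then z i else (i \in s).
have ct' : closure (D m) t' by apply: HL => i iL; rewrite /t' iL.
have [t'' [Dt'' ct'']] := ct' _ (cyl_nbhs t' (A k'.+1)).
have kk' : (k < k')%N by rewrite /k'; lia.
have [n [n' [Hn Hn' Hle]]] := Dt'' k k' (leq_maxl _ _) kk'.
have Akk' : (A k.+1 <= A k')%N by apply: mono.
have nn' : (n.+1 <= n'.+1)%N by lia.
have Lk : (L <= A k)%N by have := Ak k; rewrite /k; lia.
have Mk' : (M <= A k')%N by have := Ak k'; rewrite /k'; lia.
have E : S t'' n' - S t'' n = \sum_(i <- s) x i.
  rewrite /S (big_cat_nat (leq0n n.+1) nn') /= addrAC subrr add0r.
  apply: sum_sel => //.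
    move=> i Hi; rewrite ct''; last by lia.
    by rewrite /t' ifF //; apply/negbTE; rewrite -leqNgt; lia.
  move=> j js; have := sM j js; move: As => /allP /(_ j js) /= Aj.
  lia.
rewrite E in Hle; lra.
Qed.
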